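(* Fix a branch-and-bound node $\mathcal{N}$ and let $\boldsymbol{\beta}^\star$ solve the node relaxation $\min_{\boldsymbol{\beta}\in\mathbb{R}^p} F(\boldsymbol{X}\boldsymbol{\beta})+2\lambda_2 g_{\mathcal{N}}(\boldsymbol{\beta})$. Let $\bar k=k-|\mathcal{J}_1(\mathcal{N})|$ and $p_f=|\mathcal{J}_f(\mathcal{N})|$. Set $z_j^\star=0$ for $j\in\mathcal{J}_0(\mathcal{N})$ and $z_j^\star=1$ for $j\in\mathcal{J}_1(\mathcal{N})$. On the free set $\mathcal{J}_f(\mathcal{N})$: if $\bar k=0$, set $z_j^\star=0$. If at most $\bar k$ free coefficients are nonzero, set $z_j^\star=1$ for nonzero $\beta_j^\star$ and $z_j^\star=0$ for zero $\beta_j^\star$. Otherwise, sort the free magnitudes as $|\beta_{\pi(1)}^\star|\ge\cdots\ge|\beta_{\pi(p_f)}^\star|$ and find an index $s\in\{0,\ldots,\bar k-1\}$ such that \[ \tau:=\frac{\sum_{r=s+1}^{p_f}|\beta_{\pi(r)}^\star|}{\bar k-s},\qquad |\beta_{\pi(s)}^\star|\ge \tau \ge |\beta_{\pi(s+1)}^\star|, \] with the convention $|\beta_{\pi(0)}^\star|=+\infty$; then set $z_{\pi(r)}^\star=1$ for $r\le s$ and $z_{\pi(r)}^\star=|\beta_{\pi(r)}^\star|/\tau$ for $r>s$, $r=1,\ldots,p_f$. The resulting vector $\boldsymbol{z}^\star$ is an optimal relaxed indicator vector paired with $\boldsymbol{\beta}^\star$, i.e., it attains the infimum defining $g_{\m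athcal{N}}(\boldsymbol{\beta}^\star)$.
   Context: Setting: cardinality-constrained generalized linear model $\min_{\boldsymbol{\beta}}\{f(\boldsymbol{X}\boldsymbol{\beta},\boldsymbol{y})+\lambda_2\|\boldsymbol{\beta}\|_2^2: \|\boldsymbol{\beta}\|_0\le k,\ \|\boldsymbol{\beta}\|_\infty\le M\}$ with $\boldsymbol{X}\in\mathbb{R}^{n\times p}$, convex differentiable loss $f$, $F(\boldsymbol{X}\boldsymbol{\beta}):=f(\boldsymbol{X}\boldsymbol{\beta},\boldsymbol{y})$, $\lambda_2>0$, $M>0$. A branch-and-bound node $\mathcal{N}$ partitions $[p]$ into $\mathcal{J}_0(\mathcal{N})$ (indicators fixed to 0), $\mathcal{J}_1(\mathcal{N})$ (fixed to 1), and the free set $\mathcal{J}_f(\mathcal{N})$. The perspective-relaxation function is $g_{\mathcal{N}}(\boldsymbol{\beta}):=\inf_{\boldsymbol{z}}\{\tfrac12\sum_{j=1}^p\beta_j^2/z_j:\ z_j\in[0,1]\ \forall j\in\mathcal{J}_f(\mathcal{N}),\ \mathbf{1}^\top\boldsymbol{z}\le k,\ |\beta_j|\le Mz_j,\ z_j=0\ \forall j\in\mathcal{J}_0(\mathcal{N}),\ z_j=1\ \forall j\in\mathcal{J}_1(\mathcal{N})\}$, with the convention $\beta_j^2/z_j=0$ when $(\beta_j,z_j)=(0,0)$ and $+\infty$ when $z_j=0$, $\beta_j\neq0$. *)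

(* Defs.v *)
From HB Require Import structures.
From mathcomp Require Import all_boot all_order all_algebra.
From mathcomp Require Import all_classical all_reals all_analysis.
Set Implicit Arguments. Unset Strict Implicit. Unset Printing Implicit Defensive.
Import Order.TTheory GRing.Theory Num.Theory.
Import numFieldNormedType.Exports.
Local Open Scope ring_scope.
Local Open Scope classical_set_scope.

Section Persp.
Variables (R : realType) (p : nat).

Definition freeset (J0 J1 : {set 'I_p}) : {set 'I_p} := ~: (J0 :|: J1).

Definition persp (b z : R) : \bar R :=
  if z == 0 then (if b == 0 then 0%E else +oo%E) else (b ^+ 2 / z)%:E.

Definition gN_feasible (M : R) (k : nat) (J0 J1 : {set 'I_p})
    (beta : 'cV[R]_p) (z : 'I_p -> R) : Prop :=
  [/\ (forall j, j \in freeset J0 J1 -> 0 <= z j <= 1),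
      \sum_(j < p) z j <= k%:R,
      (forall j, `|beta j ord0| <= M * z j),
      (forall j, j \in J0 -> z j = 0) &
      (forall j, j \in J1 -> z j = 1)].

Definition gN_obj (beta : 'cV[R]_p) (z : 'I_p -> R) : \bar R :=
  ((2%:R)^-1)%:E * (\sum_(j < p) persp (beta j ord0) (z j))%E.

Definition gN (M : R) (k : nat) (J0 J1 : {set 'I_p}) (beta : 'cV[R]_p) : \bar R :=
  ereal_inf [set gN_obj beta z | z in [set z | gN_feasible M k J0 J1 beta z]].

Definition gN_optimal (M : R) (k : nat) (J0 J1 : {set 'I_p})
    (beta : 'cV[R]_p) (z : 'I_p -> R) : Prop :=
  gN_feasible M k J0 J1 beta z /\ gN_obj beta z = gN M k J0 J1 beta.

(* pi : {1..pf} -> J_f is a bijection sorting free magnitudes decreasingly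
   (1-based ranks as in the paper; values of pi outside 1..pf irrelevant) *)
Definition sorting_perm (J0 J1 : {set 'I_p}) (beta : 'cV[R]_p)
    (pi : nat -> 'I_p) : Prop :=
  let pf := #|freeset J0 J1| in
  [/\ (forall r, (0 < r <= pf)%N -> pi r \in freeset J0 J1),
      (forall r1 r2, (0 < r1 <= pf)%N -> (0 < r2 <= pf)%N -> pi r1 = pi r2 -> r1 = r2),
      (forall j, j \in freeset J0 J1 -> exists2 r, (0 < r <= pf)%N & pi r = j) &
      (forall r1 r2, (0 < r1)%N -> (r1 <= r2 <= pf)%N ->
          `|beta (pi r2) ord0| <= `|beta (pi r1) ord0|)].

Definition tau_of (J0 J1 : {set 'I_p}) (beta : 'cV[R]_p) (pi : nat -> 'I_p)
    (kbar s : nat) : R :=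
  (\sum_(s.+1 <= r < #|freeset J0 J1|.+1) `|beta (pi r) ord0|) / (kbar - s)%:R.

Definition valid_split (J0 J1 : {set 'I_p}) (beta : 'cV[R]_p) (pi : nat -> 'I_p)
    (kbar s : nat) : Prop :=
  let tau := tau_of J0 J1 beta pi kbar s in
  [/\ (s < kbar)%N,
      (s = 0%N \/ tau <= `|beta (pi s) ord0|) &
      `|beta (pi s.+1) ord0| <= tau].

End Persp.

(* Main.v *)
Require Import Defs.
From HB Require Import structures.
From mathcomp Require Import all_boot all_order all_algebra.
From mathcomp Require Import all_classical all_reals all_analysis.
From mathcomp Require Import ring lra zify.
Import Order.TTheory GRing.Theory Num.Theory.
Import numFieldNormedType.Exports.
Local Open Scope ring_scope.

Section Helpers.
Variables (R : realType) (p : nat).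

Lemma persp_lbA (b z c : R) : 0 <= z ->
  ((2 * `|b| * c - c ^+ 2 * z)%:E <= persp b z)%E.
Proof.
move=> z0; rewrite /persp; have [->|zn0] := eqVneq z 0.
  case: eqP => [->|_]; last exact: leey.
  by rewrite lee_fin normr0 !mulr0 mul0r subr0.
have zp : 0 < z by rewrite lt0r zn0.
rewrite lee_fin ler_pdivlMr // -(real_normK (num_real b)).
have := sqr_ge0 (`|b| - c * z). nra.
Qed.

Lemma persp_lbB (b z c : R) : 0 <= z <= 1 -> 0 <= c <= `|b| ->
  ((b ^+ 2 + c ^+ 2 - c ^+ 2 * z)%:E <= persp b z)%E.
Proof.
move=> /andP[z0 z1] /andP[c0 cb]; rewrite /persp; have [->|zn0] := eqVneq z 0.
  case: eqP => [b0|_]; last exact: leey.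
  have c00 : c = 0 by move: cb; rewrite b0 normr0 => cb; apply/le_anti; rewrite cb c0.
  rewrite b0 c00 lee_fin expr0n /= !add0r mul0r; lra.
have zp : 0 < z by rewrite lt0r zn0.
rewrite lee_fin ler_pdivlMr // -(real_normK (num_real b)).
have h1 : c ^+ 2 * z <= `|b| ^+ 2.
  have : c ^+ 2 <= `|b| ^+ 2 by rewrite lerXn2r // ?nnegrE.
  have : c ^+ 2 * z <= c ^+ 2 by rewrite ler_piMr // sqr_ge0.
  lra.
have h2 : 0 <= 1 - z by rewrite subr_ge0.
have h3 : 0 <= `|b| ^+ 2 - c ^+ 2 * z by rewrite subr_ge0.
have := mulr_ge0 h2 h3.
nra.
Qed.

Lemma persp_fin (b z : R) : (z = 0 -> b = 0) -> persp b z = (b ^+ 2 / z)%:E.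
Proof.
move=> H; rewrite /persp; case: eqP => [z0|//].
by rewrite (H z0) eqxx expr0n /= mul0r.
Qed.


Lemma opt_crit M k (J0 J1 : {set 'I_p}) (beta : 'cV[R]_p) (z : 'I_p -> R) (t : R) :
  gN_feasible M k J0 J1 beta z ->
  (forall j, z j = 0 -> beta j ord0 = 0) ->
  0 <= t -> (t = 0 \/ \sum_(j < p) z j = k%:R) ->
  (forall z', gN_feasible M k J0 J1 beta z' -> forall j,
      ((beta j ord0 ^+ 2 / z j + t * (z j - z' j))%:E <= persp (beta j ord0) (z' j))%E) ->
  gN_optimal M k J0 J1 beta z.
Proof.
move=> Hz Hz0 t0 Ht Hlb; split => //.
apply/le_anti/andP; split; last first.
  by apply: ereal_inf_lbound; exists z.
apply/ereal_infP => _ [z' Hz' <-].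
rewrite /gN_obj; apply: lee_wpmul2l; first by rewrite lee_fin invr_ge0.
rewrite (eq_bigr (fun j => (beta j ord0 ^+ 2 / z j)%:E)); last by move=> j _; rewrite persp_fin //; apply: Hz0.
apply: (le_trans _ (lee_sum _ (fun j _ => Hlb z' Hz' j))).
rewrite !sumEFin lee_fin big_split /= lerDl.
case: Ht => [->|Hs]; first by rewrite big1 // => j _; rewrite mul0r.
rewrite -mulr_sumr; apply: mulr_ge0 => //; rewrite sumrB subr_ge0 Hs.
by case: Hz' => _ ? _ _ _.
Qed.

Lemma sum_split (J0 J1 : {set 'I_p}) (z : 'I_p -> R) :
  (forall j, j \in J0 -> z j = 0) -> (forall j, j \in J1 -> z j = 1) ->
  \sum_(j < p) z j = #|J1|%:R + \sum_(j in freeset J0 J1) z j.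
Proof.
move=> H0 H1.
rewrite (bigID (mem (freeset J0 J1))) /= addrC; congr (_ + _).
rewrite (bigID (mem J1)) /= [X in _ + X]big1; last first.
  move=> j /andP[]; rewrite /freeset !inE negbK => /orP[/H0 //|->] //.
rewrite addr0 (eq_bigr (fun _ => 1)); last by move=> j /andP[_ /H1].
rewrite (eq_bigl (mem J1)); first by rewrite sumr_const.
move=> j /=; rewrite /freeset !inE negbK.
by case: (j \in J1); rewrite ?orbT ?andbF.
Qed.

Lemma reindex (J0 J1 : {set 'I_p}) (beta : 'cV[R]_p) (pi : nat -> 'I_p) (f : 'I_p -> R) :
  sorting_perm J0 J1 beta pi ->
  \sum_(j in freeset J0 J1) f j = \sum_(1 <= r < #|freeset J0 J1|.+1) f (pi r).
Proof.
case=> Hin Hinj Hsurj _.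
rewrite -big_enum /index_iota subSS subn0 -(big_map pi predT f).
apply: perm_big; apply: uniq_perm.
- exact: enum_uniq.
- rewrite map_inj_in_uniq ?iota_uniq // => r1 r2; rewrite !mem_iota !add1n.
  by move=> ? ?; apply: Hinj.
move=> j; rewrite mem_enum; apply/idP/mapP.
  by move=> /Hsurj [r Hr <-]; exists r; rewrite // mem_iota add1n.
by move=> [r]; rewrite mem_iota add1n => Hr ->; apply: Hin.
Qed.

End Helpers.
Arguments sum_split {R p J0 J1 z}.
Arguments persp_lbA {R}.
Arguments persp_lbB {R}.
Arguments persp_fin {R}.
Arguments reindex {R p J0 J1 beta pi} f.
Arguments opt_crit {R p M k J0 J1 beta z} t.

Theorem theorem1 (R : realType) (n p : nat) (X : 'M[R]_(n, p))
    (F : 'cV[R]_n -> R)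
    (F_convex : forall (u v : 'cV[R]_n) (t : R), 0 <= t <= 1 ->
        F (t *: u + (1 - t) *: v) <= t * F u + (1 - t) * F v)
    (F_diff : forall u : 'cV[R]_n, differentiable F u)
    (lambda2 M : R) (k : nat) (J0 J1 : {set 'I_p})
    (lambda2_pos : 0 < lambda2) (M_pos : 0 < M)
    (J01_disj : [disjoint J0 & J1]) (J1_le_k : (#|J1| <= k)%N)
    (betas : 'cV[R]_p)
    (betas_opt : forall beta : 'cV[R]_p,
        ((F (X *m betas))%:E + (2 * lambda2)%:E * gN M k J0 J1 betas
         <= (F (X *m beta))%:E + (2 * lambda2)%:E * gN M k J0 J1 beta)%E) :
  let Jf := freeset J0 J1 in
  let kbar := (k - #|J1|)%N in
  let pf := #|Jf| in
  let nnz := #|[set j in Jf | betas j ord0 != 0]| in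
  (* common part: z_j = 0 on J0, z_j = 1 on J1 *)
  let fixed_ok (z : 'I_p -> R) :=
    (forall j, j \in J0 -> z j = 0) /\ (forall j, j \in J1 -> z j = 1) in
  [/\ (* case kbar = 0 *)
      (kbar = 0%N -> forall z : 'I_p -> R, fixed_ok z ->
         (forall j, j \in Jf -> z j = 0) -> gN_optimal M k J0 J1 betas z),
      (* case at most kbar nonzero free coefficients *)
      ((0 < kbar)%N -> (nnz <= kbar)%N -> forall z : 'I_p -> R, fixed_ok z ->
         (forall j, j \in Jf -> z j = if betas j ord0 != 0 then 1 else 0) ->
         gN_optimal M k J0 J1 betas z) &
      (* otherwise: sorting and threshold *)
      ((0 < kbar)%N -> (kbar < nnz)%N -> forall pi : nat -> 'I_p,
         sorting_perm J0 J1 betas pi ->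
         (exists s, valid_split J0 J1 betas pi kbar s) /\
         (forall s, valid_split J0 J1 betas pi kbar s ->
          forall z : 'I_p -> R, fixed_ok z ->
          (forall r, (0 < r <= s)%N -> z (pi r) = 1) ->
          (forall r, (s < r <= pf)%N ->
             z (pi r) = `|betas (pi r) ord0| / tau_of J0 J1 betas pi kbar s) ->
          gN_optimal M k J0 J1 betas z))].
Proof.
move=> Jf kbar pf nnz fixed_ok.
have [z' Hz'] : exists z', gN_feasible M k J0 J1 betas z'.
  case: (pselect (exists z', gN_feasible M k J0 J1 betas z')) => // nf.
  have ginf : gN M k J0 J1 betas = +oo%E.
    rewrite /gN (_ : [set z | _]%classic = set0%classic) ?image_set0 ?ereal_inf0 //.
    by apply/seteqP; split=> z //= Hz; apply: nf; exists z.
  pose z0 := fun j : 'I_p => if j \in J1 then (1 : R) else 0.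
  have g0 : (gN M k J0 J1 0 <= 0)%E.
    apply: (le_trans (ereal_inf_lbound _)).
      exists z0 => //; split.
      - by move=> j _; rewrite /z0; case: (j \in J1); rewrite ?lexx ?ler01.
      - rewrite /z0 -big_mkcond sumr_const ler_nat //.
      - by move=> j; rewrite mxE normr0 /z0; case: (j \in J1); rewrite ?mulr0 ?mulr1 // ltW.
      - move=> j j0; rewrite /z0; case: ifP => // j1.
        by move: J01_disj => /disjoint_setI0 /setP /(_ j); rewrite !inE j0 j1.
      - by move=> j j1; rewrite /z0 j1.
    rewrite /gN_obj big1 ?mule0 // => j _.
    by rewrite /persp mxE eqxx; case: ifP => //; rewrite expr0n /= mul0r.
  have := betas_opt 0; rewrite ginf.
  rewrite gt0_muley ?lte_fin ?mulr_gt0 // addey // leye_eq => /eqP.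
  have : ((2 * lambda2)%:E * gN M k J0 J1 0 <= 0)%E.
    by rewrite -(mule0 (2 * lambda2)%:E); apply: lee_wpmul2l; rewrite // lee_fin mulr_ge0 // ltW.
  move=> h1 h2.
  have h3 : ((F (X *m 0))%:E + (2 * lambda2)%:E * gN M k J0 J1 0 <= (F (X *m 0))%:E)%E.
    by rewrite -[X in (_ <= X)%E]adde0; apply: leeD2l.
  by move: h3; rewrite h2 leye_eq.
have [Hz'f Hz's Hz'b Hz'0 Hz'1] := Hz'.
have J1nf : forall j, j \in J1 -> j \notin Jf.
  by move=> j; rewrite /Jf /freeset !inE => ->; rewrite orbT.
have J0nf : forall j, j \in J0 -> j \notin Jf.
  by move=> j; rewrite /Jf /freeset !inE => ->.
have nfree : forall j, j \notin Jf -> (j \in J0) || (j \in J1).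
  by move=> j; rewrite /Jf /freeset !inE negbK.
have bJ0 : forall j, j \in J0 -> betas j ord0 = 0.
  move=> j j0; apply/normr0_eq0/le_anti; rewrite normr_ge0 andbT.
  by have := Hz'b j; rewrite Hz'0 // mulr0.
have bM : forall j, `|betas j ord0| <= M.
  move=> j; apply: (le_trans (Hz'b j)); rewrite ger_pMr //.
  case: (boolP (j \in Jf)) => [/Hz'f /andP[] //| /nfree /orP[/Hz'0 -> | /Hz'1 ->]] //; exact: ler01.
have kbarE : kbar%:R = k%:R - #|J1|%:R :> R by rewrite natrB.
have sumz' : \sum_(j in Jf) z' j <= kbar%:R.
  by have := sum_split Hz'0 Hz'1; rewrite kbarE; lra.
have nonfree_ok : forall z z'', fixed_ok z -> gN_feasible M k J0 J1 betas z'' ->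
   forall j, j \notin Jf ->
   [/\ (z j = 0 -> betas j ord0 = 0), `|betas j ord0| <= M * z j &
     forall t, ((betas j ord0 ^+ 2 / z j + t * (z j - z'' j))%:E
                 <= persp (betas j ord0) (z'' j))%E].
  move=> z z'' [Hz0 Hz1] [_ _ _ H0 H1] j /nfree /orP[j0|j1].
    rewrite Hz0 // H0 // bJ0 // normr0 mulr0; split => // t.
    by rewrite subrr mulr0 addr0 expr0n /= mul0r /persp eqxx.
  rewrite Hz1 // H1 // mulr1 bM; split => // [/eqP|t].
    by rewrite oner_eq0.
  by rewrite subrr mulr0 addr0 /persp oner_eq0 divr1.
split.
- move=> kb0 z [Hz0 Hz1] Hzf.
  have z'f0 : forall j, j \in Jf -> z' j = 0.
    have s0 : \sum_(j in Jf) z' j = 0.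
      apply/le_anti; rewrite sumr_ge0 ?andbT; first by move: sumz'; rewrite kb0.
      by move=> i /Hz'f /andP[].
    by move=> j jf; apply: (psumr_eq0P _ s0) => // i /Hz'f /andP[].
  have bf0 : forall j, j \in Jf -> betas j ord0 = 0.
    move=> j jf; apply/normr0_eq0/le_anti; rewrite normr_ge0 andbT.
    by have := Hz'b j; rewrite z'f0 // mulr0.
  have zok : fixed_ok z by [].
  apply: (opt_crit 0).
  + split.
    * by move=> j jf; rewrite Hzf // lexx ler01.
    * by rewrite (sum_split Hz0 Hz1) big1 ?addr0 ?ler_nat // => j /Hzf.
    * move=> j; case: (boolP (j \in Jf)) => [jf|jnf].
        by rewrite bf0 // normr0 Hzf // mulr0.
      by case: (nonfree_ok z z' zok Hz' j jnf).
    * exact: Hz0.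
    * exact: Hz1.
  + move=> j; case: (boolP (j \in Jf)) => [jf _|jnf]; first exact: bf0.
    by case: (nonfree_ok z z' zok Hz' j jnf).
  + exact: lexx.
  + by left.
  + move=> z'' Hz'' j; case: (boolP (j \in Jf)) => [jf|jnf]; last first.
      by case: (nonfree_ok z z'' zok Hz'' j jnf).
    rewrite mul0r addr0 bf0 // expr0n /= mul0r.
    have := persp_lbA 0 (z'' j) 0; rewrite normr0 !mulr0 ?mul0r ?expr0n /= ?mul0r ?subr0; apply.
    by case: Hz'' => /(_ j jf) /andP[].
- move=> kbpos nnzle z [Hz0 Hz1] Hzf.
  have zok : fixed_ok z by [].
  apply: (opt_crit 0).
  + split.
    * by move=> j jf; rewrite Hzf //; case: ifP => _; rewrite ?lexx ?ler01.
    * rewrite (sum_split Hz0 Hz1) (eq_bigr (fun j => if betas j ord0 != 0 then 1 else 0)); last by move=> j /Hzf.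
      rewrite -big_mkcondr (eq_bigl (mem [set j in Jf | betas j ord0 != 0])); last by move=> j; rewrite !inE.
      rewrite sumr_const -natrD ler_nat.
      move: nnzle; rewrite /kbar /nnz; lia.
    * move=> j; case: (boolP (j \in Jf)) => [jf|jnf].
        rewrite Hzf //; case: eqP => [->|_] /=; first by rewrite normr0 mulr0.
        by rewrite mulr1.
      by case: (nonfree_ok z z' zok Hz' j jnf).
    * exact: Hz0.
    * exact: Hz1.
  + move=> j; case: (boolP (j \in Jf)) => [jf|jnf].
      by rewrite Hzf //; case: eqP => // _ /eqP; rewrite oner_eq0.
    by case: (nonfree_ok z z' zok Hz' j jnf).
  + exact: lexx.
  + by left.
  + move=> z'' Hz'' j; case: (boolP (j \in Jf)) => [jf|jnf]; last first.
      by case: (nonfree_ok z z'' zok Hz'' j jnf).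
    have zb : 0 <= z'' j <= 1 by case: Hz'' => /(_ j jf).
    rewrite mul0r addr0 Hzf //; case: eqP => [->|bn0] /=.
      rewrite expr0n /= mul0r.
      have := persp_lbA 0 (z'' j) 0; rewrite normr0 !mulr0 ?mul0r ?expr0n /= ?mul0r ?subr0; apply.
      by case/andP: zb.
    rewrite divr1.
    have := persp_lbB (betas j ord0) (z'' j) 0 zb; rewrite expr0n /= addr0 mul0r subr0; apply.
    by rewrite lexx normr_ge0.
move=> kbpos kbnnz pi Hpi.
have [Hpin Hpinj Hpisurj Hpisort] := Hpi.
pose a r := `|betas (pi r) ord0|.
have a0 : forall r, 0 <= a r by move=> r; exact: normr_ge0.
have nnzpf : (nnz <= pf)%N.
  by rewrite /nnz /pf; apply: subset_leq_card; apply/fintype.subsetP => j; rewrite inE => /andP[].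
have key : forall s, (s < kbar)%N -> exists2 r, (s < r <= pf)%N & 0 < a r.
  move=> s skb; case: (pselect (exists2 r, (s < r <= pf)%N & 0 < a r)) => // H.
  exfalso.
  have H' : forall r, (s < r <= pf)%N -> betas (pi r) ord0 = 0.
    move=> r Hr; apply/normr0_eq0/eqP; rewrite eq_le a0 andbT leNgt; apply/negP => ar.
    by apply: H; exists r.
  have : (nnz <= s)%N.
    rewrite -[X in (_ <= X)%N](size_iota 1) -(size_map pi).
    apply: (leq_trans _ (card_size _)); apply: subset_leq_card; apply/fintype.subsetP => x; rewrite inE => /andP[jf bn0].
    have [r /andP[r0 rpf] rj] := Hpisurj x jf.
    apply/mapP; exists r => //; rewrite mem_iota add1n r0 /= ltnS.
    case: (leqP r s) => // sr.
    by move: bn0; rewrite -rj H' ?sr ?rpf ?eqxx.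
  move: skb kbnnz; rewrite /kbar /nnz; lia.
have Ssum : forall s r, (s < r <= pf)%N -> a r <= \sum_(s.+1 <= i < pf.+1) a i.
  move=> s r /andP[sr rpf].
  rewrite (big_cat_nat (n:=r.+1)) //= ?ltnS //; last exact: ltnW.
  rewrite big_nat_recr //=.
  have h1 : 0 <= \sum_(s.+1 <= i < r) a i by apply: sumr_ge0.
  have h2 : 0 <= \sum_(r.+1 <= i < pf.+1) a i by apply: sumr_ge0.
  lra.
have Pex : exists s, (s < kbar)%N &&
    ((kbar - s.+1)%:R * a s.+1 <= \sum_(s.+2 <= r < pf.+1) a r).
  by exists kbar.-1; rewrite prednK // leqnn subnn mul0r sumr_ge0.
split.
  case: (ex_minnP Pex) => s /andP[skb Cs] smin; exists s; split => //.
  - case: s skb Cs smin => [|s'] skb Cs smin; [by left|right].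
    have nP : ~~ ((s' < kbar)%N &&
        ((kbar - s'.+1)%:R * a s'.+1 <= \sum_(s'.+2 <= r < pf.+1) a r)).
      by apply/negP => /smin; rewrite ltnn.
    rewrite (ltn_trans (ltnSn s') skb) /= -ltNge in nP.
    rewrite /tau_of ler_pdivrMr ?ltr0n ?subn_gt0 //.
    by rewrite mulrC ltW.
  - have spf : (s < pf)%N by move: skb kbnnz nnzpf; rewrite /kbar /nnz /pf; lia.
    rewrite /tau_of ler_pdivlMr ?ltr0n ?subn_gt0 // big_ltn ?ltnS //.
    rewrite -(subnSK skb) -natr1 mulrDr mulr1 [X in X <= _]addrC lerD2l mulrC.
    exact: Cs.
move=> s [skb sor stau] z [Hz0 Hz1] Hzr Hzr2.
have zok : fixed_ok z by [].
set tau := tau_of J0 J1 betas pi kbar s in sor stau Hzr2.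
have spf : (s < pf)%N by move: skb kbnnz nnzpf; rewrite /kbar /nnz /pf; lia.
have [r0 Hr0 ar0] := key s skb.
have Spos : 0 < \sum_(s.+1 <= i < pf.+1) a i := lt_le_trans ar0 (Ssum s r0 Hr0).
have kspos : 0 < (kbar - s)%:R :> R by rewrite ltr0n subn_gt0.
have taupos : 0 < tau by rewrite /tau /tau_of divr_gt0.
have taueq : \sum_(s.+1 <= i < pf.+1) a i = tau * (kbar - s)%:R.
  by rewrite /tau /tau_of divfK // gt_eqF.
have abig : forall r, (0 < r <= s)%N -> tau <= a r.
  move=> r /andP[r0' rs]; case: sor => [s0|h]; first by move: rs; rewrite s0 leqn0 => /eqP r00; move: r0'; rewrite r00.
  apply: (le_trans h); apply: Hpisort => //; rewrite rs /=; exact: ltnW.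
have asmall : forall r, (s < r <= pf)%N -> a r <= tau.
  move=> r /andP[sr rpf]; apply: (le_trans _ stau); apply: Hpisort => //.
  by rewrite sr rpf.
have tauM : tau <= M.
  case: sor => [s0|h]; last exact: (le_trans h (bM _)).
  rewrite /tau /tau_of s0 ler_pdivrMr ?ltr0n ?subn0 //.
  rewrite -(reindex (fun j => `|betas j ord0|) Hpi).
  apply: (le_trans (ler_sum _ (fun j _ => Hz'b j))).
  by rewrite -mulr_sumr ler_pM2l.
have zfree : forall r, (0 < r <= pf)%N ->
  [/\ 0 <= z (pi r) <= 1, `|betas (pi r) ord0| <= M * z (pi r),
      (z (pi r) = 0 -> betas (pi r) ord0 = 0) &
      forall z'', gN_feasible M k J0 J1 betas z'' ->
      ((betas (pi r) ord0 ^+ 2 / z (pi r) + tau ^+ 2 * (z (pi r) - z'' (pi r)))%:E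
         <= persp (betas (pi r) ord0) (z'' (pi r)))%E].
  move=> r /andP[r0' rpf].
  have rf : pi r \in Jf by apply: Hpin; rewrite r0'.
  case: (leqP r s) => [rs|sr].
    rewrite Hzr ?r0' // ler01 lexx mulr1 bM; split => // [/eqP|z'' Hz''].
      by rewrite oner_eq0.
    have zb : 0 <= z'' (pi r) <= 1 by case: Hz'' => /(_ _ rf).
    have := persp_lbB (betas (pi r) ord0) (z'' (pi r)) tau zb.
    rewrite (ltW taupos) abig ?r0' // => /(_ isT).
    by rewrite divr1 mulrBr mulr1 addrA.
  have Hr : (s < r <= pf)%N by rewrite sr rpf.
  rewrite Hzr2 //; split.
  - rewrite divr_ge0 ?(ltW taupos) //= ler_pdivrMr // mul1r; exact: asmall.
  - by rewrite mulrCA; apply: ler_peMr => //; rewrite ler_pdivlMr // mul1r.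
  - by move/eqP; rewrite mulf_eq0 invr_eq0 (gt_eqF taupos) orbF normr_eq0 => /eqP.
  move=> z'' Hz''.
  have zb : 0 <= z'' (pi r) by case: Hz'' => /(_ _ rf) /andP[].
  apply: le_trans (persp_lbA _ _ tau zb); rewrite lee_fin le_eqVlt; apply/orP; left; apply/eqP.
  rewrite -(real_normK (num_real (betas (pi r) ord0))).
  have [->|bn0] := eqVneq `|betas (pi r) ord0| 0.
    by rewrite expr0n /= !mul0r !mulr0 !add0r mul0r sub0r mulrN.
  by field; rewrite bn0 gt_eqF.
have sumk : \sum_(j < p) z j = k%:R.
  rewrite (sum_split Hz0 Hz1) (reindex z Hpi) (big_cat_nat (n:=s.+1)) //=; last exact: ltnW.
  rewrite (eq_big_nat _ _ (F2 := fun _ => 1)); last by move=> r Hr; apply: Hzr.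
  rewrite (eq_big_nat _ _ (m := s.+1) (F2 := fun r => a r / tau)); last first.
    by move=> r /andP[h1 h2]; apply: Hzr2; rewrite h1.
  rewrite sumr_const_nat -mulr_suml taueq [tau * _]mulrC mulfK ?gt_eqF //.
  rewrite subSS subn0 -!natrD; congr (_%:R); rewrite subnKC ?(ltnW skb) // subnKC //.
apply: (opt_crit (tau ^+ 2)).
- split.
  + by move=> j jf; have [r Hr <-] := Hpisurj j jf; case: (zfree r Hr).
  + by rewrite sumk.
  + move=> j; case: (boolP (j \in Jf)) => [jf|jnf].
      by have [r Hr <-] := Hpisurj j jf; case: (zfree r Hr).
    by case: (nonfree_ok z z' zok Hz' j jnf).
  + exact: Hz0.
  + exact: Hz1.
- move=> j; case: (boolP (j \in Jf)) => [jf|jnf].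
    by have [r Hr <-] := Hpisurj j jf; case: (zfree r Hr).
  by case: (nonfree_ok z z' zok Hz' j jnf).
- exact: sqr_ge0.
- by right.
move=> z'' Hz'' j; case: (boolP (j \in Jf)) => [jf|jnf].
  have [r Hr <-] := Hpisurj j jf; case: (zfree r Hr) => _ _ _; exact.
by case: (nonfree_ok z z'' zok Hz'' j jnf).
Qed.
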